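(* Let $q=\{q_n\}_{n\geq1}$ be a system of Beurling primes with Beurling integers $\{\nu_n\}_{n\geq1}$, such that $\sigma_c(\zeta_q)<\infty$ and there are constants $c>0$, $C>0$ with $\nu_{n+1}-\nu_n\geq c\,\nu_{n+1}^{-C}$ for all $n\in\mathbb{N}$. Then for every $\varepsilon>0$ and for almost every $q'>1$, the set $q\cup\{q'\}$ is a system of Beurling primes whose Beurling integers $\{\nu'_n\}_{n\geq1}$ satisfy, for some constant $c'>0$ (depending on $q'$ and $q$), $$\nu'_{n+1}-\nu'_n\geq c'\,(\nu'_{n+1})^{-C'},\qquad n\in\mathbb{N},$$ where $C'=\max\bigl(C,\,2\sigma_c(\zeta_q)-1+\varepsilon\bigr)$.
   Context: A system of Beurling primes is an increasing sequence (finite or infinite) $q=\{q_n\}$ of real numbers with $q_n>1$ (and $q_n\to\infty$ if infinite) such that $\{\log q_n\}$ is linearly independent over $\mathbb{Q}$. The Beurling integers $\mathbb{N}_q=\{\nu_n\}_{n\geq1}$ are all finite products of elements of $q$ (including $\nu_1=1$), listed in increasing order. The Beurling zeta function is $\zeta_q(s)=\sum_{n\geq1}\nu_n^{-s}=\prod_{n}(1-q_n^{-s})^{-1}$, and $\sigma_c(\zeta_q)$ denotes the abscissa of convergence of this Dirichlet series. *)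

(* Defs.v *)
From HB Require Import structures.
From mathcomp Require Import all_boot all_order all_algebra.
From mathcomp Require Import all_classical all_reals all_analysis.
Set Implicit Arguments. Unset Strict Implicit. Unset Printing Implicit Defensive.
Import Order.TTheory GRing.Theory Num.Theory.
Local Open Scope classical_set_scope.
Local Open Scope ring_scope.

Section Beurling.
Variable R : realType.

(* A system of Beurling primes, represented by its set of elements Q:
   all elements > 1; only finitely many elements below any bound
   (= an increasing sequence that is finite, or infinite tending to oo);
   the logarithms are linearly independent over the rationals. *)
Definition beurling_system (Q : set R) : Prop :=
  [/\ (forall p, Q p -> 1 < p),
      (forall x : R, finite_set (Q `&` `]-oo, x]))
    & (forall (s : seq R) (r : R -> rat),
         uniq s -> (forall p, p \in s -> Q p) ->
         \sum_(p <- s) (ratr (r p) * ln p) = 0 ->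
         forall p, p \in s -> r p = 0)].

Definition beurling_integers (Q : set R) : set R :=
  [set x | exists s : seq R, (forall p, p \in s -> Q p) /\ x = \prod_(p <- s) p].

(* Abscissa of convergence of zeta_Q(s) = sum_n nu_n^{-s}; the terms are
   positive, so convergence of the Dirichlet series at real s is the
   finiteness of the (unordered) sum. *)
Definition sigma_c (Q : set R) : \bar R :=
  ereal_inf [set (s%:E) | s in
    [set s : R | (\esum_(x in beurling_integers Q) ((x `^ (- s))%:E) < +oo)%E]].

Definition gap_condition (Q : set R) (c C : R) : Prop :=
  forall x y, beurling_integers Q x -> beurling_integers Q y -> x < y ->
    (forall z, beurling_integers Q z -> ~ (x < z /\ z < y)) ->
    c * y `^ (- C) <= y - x.

End Beurling.

(* Main.v *)
Require Import Defs.
From HB Require Import structures.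
From mathcomp Require Import all_boot all_order all_algebra.
From mathcomp Require Import all_classical all_reals all_analysis.
From mathcomp Require Import ring lra.
Import Order.TTheory GRing.Theory Num.Theory.
Local Open Scope classical_set_scope.
Local Open Scope ring_scope.
Set Implicit Arguments. Unset Strict Implicit.

Section Tools.
Variable R : realType.
Local Open Scope ereal_scope.

Lemma esum_ub (T : choiceType) (I : set T) (a : T -> \bar R) (M : \bar R) :
  (forall X, fsets I X -> \sum_(i \in X) a i <= M) -> \esum_(i in I) a i <= M.
Proof. by move=> h; apply: ub_ereal_sup => _ [X IX <-]; exact: h. Qed.

Lemma esumZl_le (T : choiceType) (I : set T) (a : T -> \bar R) (k : R) :
  (0 <= k)%R -> (forall i, I i -> 0 <= a i) ->
  \esum_(i in I) (k%:E * a i) <= k%:E * \esum_(i in I) a i.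
Proof.
move=> k0 a0; apply: esum_ub => X [finX XI].
have := @esum_ge _ _ I a (\sum_(i \in X) a i).
move=> /(_ (ex_intro2 _ _ X (conj finX XI) (lexx _))) h.
rewrite fsbig_finite// big_seq -ge0_sume_distrr; last first.
  by move=> i; rewrite in_fset_set// inE => /XI /a0.
apply: lee_wpmul2l; first by rewrite lee_fin.
by rewrite -big_seq -fsbig_finite.
Qed.


Lemma esumZl_le' (T : choiceType) (I : set T) (a : T -> \bar R) (k : R) :
  (0 <= k)%R -> (forall i, I i -> 0 <= a i) ->
  \esum_(i in I) (a i * k%:E) <= (\esum_(i in I) a i) * k%:E.
Proof.
move=> k0 a0; rewrite muleC; under eq_esum do rewrite muleC.
exact: esumZl_le.
Qed.

End Tools.

Section Basic.
Variable R : realType.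
Variable Q : set R.

Lemma bi1 : beurling_integers Q 1.
Proof. by exists [::]; split => //; rewrite big_nil. Qed.

Lemma biM x y : beurling_integers Q x -> beurling_integers Q y ->
  beurling_integers Q (x * y).
Proof.
move=> [s [sQ ->]] [t [tQ ->]]; exists (s ++ t); split; last by rewrite big_cat.
by move=> p; rewrite mem_cat => /orP[/sQ|/tQ].
Qed.

Lemma bi_ge1 x : (forall p, Q p -> 1 < p) -> beurling_integers Q x -> 1 <= x.
Proof.
move=> Q1 [s [sQ ->]]; rewrite big_seq; apply: (big_ind (fun x => 1 <= x)).
- by [].
- by move=> u v u1 v1; rewrite -(mulr1 1) ler_pM.
- by move=> p /sQ /Q1 /ltW.
Qed.

Lemma biU_dec (q : R) x : beurling_integers (Q `|` [set q]) x ->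
  exists nu k, beurling_integers Q nu /\ x = nu * q ^+ k.
Proof.
move=> [s [sQ ->]]; elim: s sQ => [|p s IH] sQ.
  by exists 1, 0%N; split; [exact: bi1|rewrite big_nil mulr1].
rewrite big_cons.
have [|nu [k [nuQ ->]]] := IH; first by move=> r rs; apply: sQ; rewrite inE rs orbT.
have [Qp|/= pq] := sQ p (mem_head _ _).
  exists (p * nu), k; split; first by apply: biM => //; exists [:: p]; split;
    [by move=> r; rewrite inE => /eqP ->|by rewrite big_seq1].
  by rewrite mulrA.
exists nu, k.+1; split => //; rewrite pq exprS; ring.
Qed.

Lemma biU_mk (q : R) nu k : beurling_integers Q nu ->
  beurling_integers (Q `|` [set q]) (nu * q ^+ k).
Proof.
move=> [s [sQ ->]]; exists (s ++ nseq k q); split.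
  by move=> p; rewrite mem_cat => /orP[/sQ|/nseqP[-> _]]; [left|right].
rewrite big_cat /= big_nseq; congr (_ * _); elim: k => [|k IH]//=.
by rewrite -IH exprS.
Qed.

End Basic.

Section Count.

Lemma countable_seqs (T : eqType) (A : set T) : countable A ->
  countable [set s : seq T | forall x, x \in s -> A x].
Proof.
move=> /countable_injP[f injf]; apply/countable_injP.
exists (fun s => pickle (map f s)) => s t; rewrite !inE /= => sA tA.
move=> /(pcan_inj pickleK); elim: s t sA tA => [|x s IH] [|y t]//= sA tA [fxy fst].
rewrite (injf x y) ?inE; [|by apply: sA; rewrite mem_head|by apply: tA; rewrite mem_head|by []].
congr (_ :: _); apply: IH => // z zs; [apply: sA|apply: tA]; by rewrite inE zs orbT.
Qed.

Lemma countable_img (T U : Type) (A : set T) (f : T -> U) :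
  countable A -> countable (f @` A).
Proof.
move=> cA; have -> : f @` A = \bigcup_(x in A) [set f x].
  by apply/seteqP; split => [y [x Ax <-]|y [x Ax ->]]; [exists x|exists x].
by apply: bigcup_countable => // x _; exact: countable1.
Qed.

Variable R : realType.

Lemma Q_countable (Q : set R) : beurling_system Q -> countable Q.
Proof.
move=> [Q1 Qfin _].
have -> : Q = \bigcup_(n in [set: nat]) (Q `&` `]-oo, n%:R]).
  apply/seteqP; split => [p Qp|p [n _ []]//].
  exists (Num.Def.archi_bound p) => //; split => //=.
  rewrite in_itv /= ltW// archi_boundP// ltW//.
  by apply: lt_trans (Q1 _ Qp).
by apply: bigcup_countable => // n _; apply: finite_set_countable; apply: Qfin.
Qed.

Lemma NQ_countable (Q : set R) : beurling_system Q -> countable (beurling_integers Q).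
Proof.
move=> bQ; have -> : beurling_integers Q =
   (fun s => \prod_(p <- s) p) @` [set s : seq R | forall x, x \in s -> Q x].
  by apply/seteqP; split => [x [s [sQ ->]]|x [s sQ <-]]; exists s.
by apply: countable_img; apply: countable_seqs; apply: Q_countable.
Qed.

End Count.

Section Indep.
Variable R : realType.
Variable Q : set R.

Definition Gbad : set R :=
  (fun s : seq (R * rat) => expR (\sum_(pr <- s) ratr pr.2 * ln pr.1)) @`
    [set s : seq (R * rat) | forall x, x \in s -> (Q `*` [set: rat]) x].

Lemma Gbad_countable : beurling_system Q -> countable Gbad.
Proof.
move=> bQ; apply: countable_img; apply: countable_seqs.
by apply: countableX; [exact: Q_countable|exact: countableP].
Qed.

Lemma indep_union q : beurling_system Q -> 1 < q -> ~ Gbad q ->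
  beurling_system (Q `|` [set q]).
Proof.
move=> [Q1 Qfin Qind] q1 nG; split.
- by move=> p [/Q1//|->].
- move=> x; rewrite setIUl finite_setU; split; first exact: Qfin.
  by apply: sub_finite_set (finite_set1 q) => y [].
move=> s r us sQ sum0.
have [allQ|] := pselect (forall p, p \in s -> Q p).
  exact: Qind sum0.
move=> /existsNP[p0 /not_implyP[p0s nQp0]].
have p0q : p0 = q by case: (sQ _ p0s).
subst p0.
pose s' := [seq p <- s | p != q].
have us' : uniq s' by rewrite filter_uniq.
have s'Q : forall p, p \in s' -> Q p.
  move=> p; rewrite mem_filter => /andP[pq ps].
  by case: (sQ _ ps) => // /eqP; rewrite (negbTE pq).
have hs : \sum_(p <- s) ratr (r p) * ln p =
    ratr (r q) * ln q + \sum_(p <- s') ratr (r p) * ln p.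
  by rewrite (bigD1_seq q)//= big_filter.
have [rq0|rqn0] := eqVneq (r q) 0.
  have sum0' : \sum_(p <- s') ratr (r p) * ln p = 0.
    by move: sum0; rewrite hs rq0 rmorph0 mul0r add0r.
  move=> p ps; have [->//|pq] := eqVneq p q.
  by apply: (Qind s' r us' s'Q sum0'); rewrite mem_filter pq.
exfalso; apply: nG.
exists [seq (p, - r p / r q) | p <- s'].
  move=> x /mapP[p ps' ->]; split => //; exact: s'Q.
rewrite big_map /=.
have rq0 : ratr (r q) != 0 :> R by rewrite fmorph_eq0.
have -> : \sum_(j <- s') ratr (- r j / r q) * ln j =
    - (ratr (r q))^-1 * \sum_(p <- s') ratr (r p) * ln p.
  rewrite mulr_sumr; apply: eq_bigr => p _.
  rewrite fmorph_div rmorphN /=; field; exact: rq0.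
have -> : \sum_(p <- s') ratr (r p) * ln p = - (ratr (r q) * ln q).
  by apply/eqP; rewrite -addr_eq0 addrC -hs sum0.
rewrite mulrN mulNr opprK mulrA mulVf// mul1r lnK//.
by rewrite posrE; apply: lt_trans q1.
Qed.

End Indep.

Section Gap.
Variable R : realType.

Lemma powN_exp_le (y C C' : R) : 1 <= y -> C <= C' -> y `^ (- C') <= y `^ (- C).
Proof. by move=> y1 CC; apply: ler_powR => //; rewrite lerN2. Qed.

Lemma powN_base_le (u v e : R) : 0 < u -> u <= v -> 0 <= e -> v `^ (- e) <= u `^ (- e).
Proof.
move=> u0 uv e0; rewrite !powRN lef_pV2 ?posrE ?powR_gt0//; last exact: lt_le_trans uv.
by apply: ge0_ler_powR => //; rewrite nnegrE ltW// (lt_le_trans u0).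
Qed.

Variable Q : set R.

Definition good (C' q : R) := exists2 c0 : R, 0 < c0 &
  forall nu mu (m : nat), beurling_integers Q nu -> beurling_integers Q mu ->
    c0 * mu `^ (- C') <= `|nu * q ^+ m.+1 - mu|.

Lemma gap_union (c C C' q : R) : beurling_system Q -> 0 < c -> 0 < C -> C <= C' ->
  gap_condition Q c C -> 1 < q -> good C' q ->
  exists2 c', 0 < c' & gap_condition (Q `|` [set q]) c' C'.
Proof.
move=> [Q1 _ _] c0 C0 CC' gQ q1 [d d0 gd].
have C'0 : 0 <= C' by apply: ltW; apply: lt_le_trans CC'.
exists (Num.min c d); first by rewrite lt_min c0 d0.
move=> x y Nx Ny xy cons.
have [nu [k [Nnu ex]]] := biU_dec Nx.
have [mu [j [Nmu ey]]] := biU_dec Ny.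
have nu1 := bi_ge1 Q1 Nnu; have mu1 := bi_ge1 Q1 Nmu.
have q0 : 0 < q by apply: lt_trans q1.
have qe n : 1 <= q ^+ n by apply: exprn_ege1; apply: ltW.
have qp n : 0 < q ^+ n by apply: exprn_gt0.
have x1 : 1 <= x by rewrite ex; rewrite -(mulr1 1) ler_pM.
have y1 : 1 <= y by apply: le_trans (ltW xy).
have y0 : 0 < y by apply: lt_le_trans y1.
have x0 : 0 < x by apply: lt_le_trans x1.
have nux : nu <= x by rewrite ex ler_peMr// (le_trans ler01).
have muy : mu <= y by rewrite ey ler_peMr// (le_trans ler01).
have step : Num.min c d * y `^ (- C') <= d * y `^ (- C').
  by rewrite ler_wpM2r ?powR_ge0 ?ge_min ?lexx ?orbT.
case: (ltngtP k j) => [kj|jk|kj].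
-
  have [m jE] : exists m, j = (m.+1 + k)%N by exists (j - k.+1)%N; rewrite addSn -addnS subnK.
  move: ey; rewrite jE exprD mulrA => ey.
  have := gd mu nu m Nmu Nnu.
  have -> : mu * q ^+ m.+1 - nu = (y - x) / q ^+ k.
    by rewrite ex ey; field; rewrite gt_eqF.
  rewrite normrM gtr0_norm ?subr_gt0// gtr0_norm ?invr_gt0// => h.
  apply: le_trans step _.
  apply: le_trans (_ : d * nu `^ (- C') <= _).
    apply: ler_wpM2l; first exact: ltW.
    apply: powN_base_le => //.
      by apply: lt_le_trans ltr01 nu1.
    by apply: le_trans nux (ltW xy).
  apply: le_trans h _; rewrite ler_pdivrMr// ler_peMr//.
  by rewrite subr_ge0 ltW.
-
  have [m kE] : exists m, k = (m.+1 + j)%N by exists (k - j.+1)%N; rewrite addSn -addnS subnK.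
  move: ex; rewrite kE exprD mulrA => ex.
  have := gd nu mu m Nnu Nmu.
  have -> : nu * q ^+ m.+1 - mu = - ((y - x) / q ^+ j).
    by rewrite ex ey; field; rewrite gt_eqF.
  rewrite normrN normrM gtr0_norm ?subr_gt0// gtr0_norm ?invr_gt0// => h.
  apply: le_trans step _.
  apply: le_trans (_ : d * mu `^ (- C') <= _).
    apply: ler_wpM2l; first exact: ltW.
    apply: powN_base_le => //.
    by apply: lt_le_trans ltr01 mu1.
  apply: le_trans h _; rewrite ler_pdivrMr// ler_peMr//.
  by rewrite subr_ge0 ltW.
- subst j.
  have numu : nu < mu by move: xy; rewrite ex ey ltr_pM2r.
  have consQ : forall z, beurling_integers Q z -> ~ (nu < z /\ z < mu).
    move=> z Nz [nz zm]; apply: (cons (z * q ^+ k)); first exact: biU_mk.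
    by rewrite ex ey !ltr_pM2r.
  have := gQ nu mu Nnu Nmu numu consQ => h.
  have : c * y `^ (- C) <= y - x.
    apply: le_trans (_ : c * mu `^ (- C) <= _).
      apply: ler_wpM2l; first exact: ltW.
    apply: powN_base_le => //; first exact: lt_le_trans ltr01 mu1.
      exact: ltW.
    apply: le_trans h _; rewrite ex ey -mulrBl ler_peMr//.
    by rewrite subr_ge0 ltW.
  move=> H; apply: le_trans H; apply: le_trans (_ : c * y `^ (- C') <= _).
    by apply: ler_wpM2r; [exact: powR_ge0|rewrite ge_min lexx].
  by apply: ler_wpM2l; [exact: ltW|exact: powN_exp_le].
Qed.

End Gap.

Section MTools.
Variable R : realType.
Local Notation mu := (@lebesgue_measure R).

Lemma cbigcup (T : choiceType) (I : set T) (F : T -> set R) :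
  countable I -> (forall i, I i -> measurable (F i)) ->
  measurable (\bigcup_(i in I) F i) /\
  (mu (\bigcup_(i in I) F i) <= \esum_(i in I) mu (F i))%E.
Proof.
move=> cI mF.
have [[t0 It0]|nI] := pselect (exists t, I t); last first.
  have -> : I = set0 by apply/seteqP; split => // t It; apply: nI; exists t.
  by rewrite bigcup_set0 measure0 esum_set0; split.
move/countable_injP: cI => [f injf].
pose P n := [set i | I i /\ f i = n].
pose G n := if pselect (exists i, P n i) is left _ then F (xget t0 (P n)) else set0.
have PG n : (exists i, P n i) -> P n (xget t0 (P n)) by move=> e; apply: xgetPex.
have GE i : I i -> G (f i) = F i.
  move=> Ii; rewrite /G; case: pselect => [e|]; last by move=> []; exists i.
  have [Ix fx] := PG _ e; congr F; apply: injf; rewrite ?inE//.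
have mG n : measurable (G n).
  rewrite /G; case: pselect => // e; apply: mF; exact: (PG _ e).1.
have UE : \bigcup_(i in I) F i = \bigcup_n G n.
  apply/seteqP; split => [x [i Ii Fix]|x [n _]].
    by exists (f i) => //; rewrite GE.
  rewrite /G; case: pselect => // e Gx; exists (xget t0 (P n)) => //.
  exact: (PG _ e).1.
rewrite UE; split; first exact: bigcupT_measurable.
have := measure_sigma_subadditive mu mG (bigcupT_measurable _ mG) (@subset_refl _ _).
move/le_trans; apply.
rewrite nneseries_esumT//.
have -> : \esum_(i in [set: nat]) mu (G i) =
    \esum_(i in [set: nat]) (if i \in f @` I then mu (G i) else 0%E).
  apply: eq_esum => n _; case: ifPn => // /negP nfI.
  rewrite /G; case: pselect => [[i [Ii fin]]|]; last by rewrite measure0.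
  by exfalso; apply: nfI; rewrite inE; exists i.
rewrite -esum_mkcond esum_image; last by move=> i j /[!inE] Ii Ij; apply: injf; rewrite inE.
by apply: le_esum => i Ii; rewrite GE.
Qed.

End MTools.

Section MTools2.
Variable R : realType.

Lemma geo_esum (r : R) : 0 < r < 1 ->
  (\esum_(i in [set: nat]) (r ^+ i)%:E <= ((1 - r)^-1)%:E)%E.
Proof.
move=> /andP[r0 r1]; rewrite -nneseries_esumT; last by move=> n; rewrite lee_fin exprn_ge0// ltW.
apply: lime_le; first by apply: is_cvg_nneseries => n _ _; rewrite lee_fin exprn_ge0// ltW.
apply: nearW => n; rewrite sumEFin lee_fin.
have := @geometric_le_lim R n 1 r ler01 r0; rewrite gtr0_norm// => /(_ r1).
by rewrite /series /= mul1r; under eq_bigr do rewrite mul1r.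
Qed.

Lemma powdiff0 (a x y : R) m : 0 < a -> a <= x -> a <= y -> y <= x ->
  a ^+ m * (x - y) <= x ^+ m.+1 - y ^+ m.+1.
Proof.
move=> a0 ax ay yx; elim: m => [|m IH]; first by rewrite !expr1 expr0 mul1r.
have -> : x ^+ m.+2 - y ^+ m.+2 = x * (x ^+ m.+1 - y ^+ m.+1) + y ^+ m.+1 * (x - y).
  by rewrite !exprS; ring.
have y0 : 0 <= y by apply: ltW; apply: lt_le_trans ay.
apply: le_trans (_ : x * (a ^+ m * (x - y)) <= _).
  rewrite exprS -mulrA mulrC [x * _]mulrC; apply: ler_wpM2l => //.
  by rewrite mulr_ge0 ?exprn_ge0 ?subr_ge0// ltW.
apply: le_trans (_ : x * (x ^+ m.+1 - y ^+ m.+1) <= _).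
  by apply: ler_wpM2l => //; rewrite (le_trans (ltW a0)).
by rewrite lerDl mulr_ge0 ?exprn_ge0// subr_ge0.
Qed.

Lemma powdiff (a x y : R) m : 0 < a -> a <= x -> a <= y ->
  a ^+ m * `|x - y| <= `|x ^+ m.+1 - y ^+ m.+1|.
Proof.
move=> a0 ax ay; have [yx|xy] := leP y x.
  rewrite !ger0_norm ?subr_ge0//; first exact: powdiff0.
  by apply: lerXn2r => //; rewrite nnegrE (le_trans (ltW a0)).
have {}xy := ltW xy.
have xpy : x ^+ m.+1 <= y ^+ m.+1.
  by apply: lerXn2r => //; rewrite ?nnegrE ?(le_trans (ltW a0)).
rewrite distrC [`|x ^+ _ - _|]distrC !ger0_norm ?subr_ge0//.
exact: powdiff0.
Qed.

Lemma powRE (x e : R) : 0 < x -> x `^ e = expR (e * ln x).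
Proof. by move=> x0; rewrite /powR gt_eqF. Qed.

End MTools2.

Section WBound.
Variable R : realType.

Definition tauc (C' : R) := (C' + 1) / 2.
Definition Kc (a C' : R) := expR (ln 4 + `|(1 - C') / 2| * (ln 2 + 2 * ln a)).
Definition rhoc (a C' : R) := expR (- (Num.min 1 C' * ln a)).

Lemma wbound (a C' nu mu q0 : R) (m : nat) : 1 < a -> 0 < C' -> 1 <= nu -> 1 <= mu ->
  a <= q0 -> q0 <= a ^+ 2 -> `|nu * q0 ^+ m.+1 - mu| < 1 ->
  4 * mu `^ (- C') / (nu * a ^+ m) <=
    Kc a C' * (mu `^ (- tauc C') * nu `^ (- tauc C')) * rhoc a C' ^+ m.
Proof.
move=> a1 C0 nu1 mu1 aq q0a hq.
have a0 : 0 < a by apply: lt_trans a1.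
have nu0 : 0 < nu by apply: lt_le_trans nu1.
have mu0 : 0 < mu by apply: lt_le_trans mu1.
have q00 : 0 < q0 by apply: lt_le_trans aq.
have [hq1 hq2] : nu * q0 ^+ m.+1 - mu < 1 /\ mu - nu * q0 ^+ m.+1 < 1.
  by move: hq; rewrite ltr_norml; case/andP => h1 h2; split; lra.
have e1 : a ^+ m.+1 <= q0 ^+ m.+1.
  by apply: lerXn2r => //; rewrite nnegrE; apply: ltW.
have e2 : q0 ^+ m.+1 <= (a ^+ 2) ^+ m.+1.
  apply: lerXn2r => //; rewrite nnegrE; apply: ltW => //. exact: exprn_gt0.
have e3 : 1 <= (a ^+ 2) ^+ m.+1 by apply: exprn_ege1; apply: exprn_ege1; apply: ltW.
have h1 : nu * a ^+ m.+1 <= 2 * mu.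
  have : nu * a ^+ m.+1 <= nu * q0 ^+ m.+1 by rewrite ler_pM2l.
  lra.
have h2 : mu <= 2 * (nu * (a ^+ 2) ^+ m.+1).
  have : nu * q0 ^+ m.+1 <= nu * (a ^+ 2) ^+ m.+1 by rewrite ler_pM2l.
  have : 1 <= nu * (a ^+ 2) ^+ m.+1 by rewrite -(mulr1 1) ler_pM.
  lra.
have E1 : 4 * mu `^ (- C') / (nu * a ^+ m) =
    expR (ln 4 + (- C') * ln mu - (ln nu + m%:R * ln a)).
  by rewrite expRB !expRD -powRE// powR_mulrn ?ltW// -powRE// !lnK ?posrE.
have E2 : Kc a C' * (mu `^ (- tauc C') * nu `^ (- tauc C')) * rhoc a C' ^+ m =
    expR ((ln 4 + `|(1 - C') / 2| * (ln 2 + 2 * ln a)) + (- tauc C') * ln mu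
      + (- tauc C') * ln nu + m%:R * (- (Num.min 1 C' * ln a))).
  by rewrite /Kc /rhoc !powRE// -expRM_natl -!expRD !addrA.
rewrite E1 E2 ler_expR.
set X := ln mu; set Y := ln nu; set L := ln a.
have pos2 : (0 : R) < 2 by [].
have l1 : Y + m.+1%:R * L <= ln 2 + X.
  have := h1; rewrite -ler_ln ?posrE ?mulr_gt0 ?exprn_gt0//.
  by rewrite !lnM ?posrE ?exprn_gt0// lnXn// mulr_natl.
have l2 : X <= ln 2 + Y + (2 * m.+1)%:R * L.
  have := h2; rewrite -ler_ln ?posrE ?mulr_gt0 ?exprn_gt0//.
  have E : ln ((a ^+ 2) ^+ m.+1) = (2 * m.+1)%:R * L.
    by rewrite lnXn ?exprn_gt0// lnXn// -mulrnA mulr_natl.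
  rewrite !lnM ?posrE ?exprn_gt0//; last by rewrite mulr_gt0// !exprn_gt0.
  by rewrite E addrA.
have L0 : 0 <= L by apply: ln_ge0; apply: ltW.
have l20 : 0 <= ln (2 : R) by apply: ln_ge0; rewrite ler1n.
have m0 : 0 <= m%:R :> R by [].
have hS : (m.+1)%:R = m%:R + 1 :> R by rewrite natr1.
rewrite /tauc; move: l1 l2; rewrite natrM hS.
have mL0 : 0 <= m%:R * L by apply: mulr_ge0.
have mL1 : 0 <= (m%:R + 1) * L by apply: mulr_ge0 => //; apply: addr_ge0.
case: (leP 1 C') => C1.
  rewrite ler0_norm; last by lra.
  move=> l1 l2.
  have h : (1 - C') / 2 * (X - Y) <= (1 - C') / 2 * (- ln 2).
    by rewrite ler_wnM2l; lra.
  nra.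
rewrite ger0_norm; last by lra.
move=> l1 l2.
have h : (1 - C') / 2 * (X - Y) <= (1 - C') / 2 * (ln 2 + (1 + 1) * (m%:R + 1) * L).
  by rewrite ler_wpM2l; lra.
nra.
Qed.

End WBound.

Section Metric.
Variable R : realType.
Variable Q : set R.
Variables (C' a : R).
Local Notation mu := (@lebesgue_measure R).
Local Notation NQ := (beurling_integers Q).

Definition Idx : set (R * (R * nat)) := NQ `*` (NQ `*` [set: nat]).
Definition dlt (i : R * (R * nat)) (N : nat) : R := (N.+1%:R)^-1 * i.2.1 `^ (- C').
Definition Pset i N : set R := [set q0 | a <= q0 /\ q0 <= a ^+ 2 /\
   `|i.1 * q0 ^+ i.2.2.+1 - i.2.1| < dlt i N].
Definition rad i N : R := 2 * dlt i N / (i.1 * a ^+ i.2.2).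
Definition Jset i N : set R :=
  if pselect (exists q0, Pset i N q0) is left _ then ball (xget 0 (Pset i N)) (rad i N)
  else set0.
Definition Uset N := \bigcup_(i in Idx) Jset i N.
Definition Wt (nu mu0 : R) (m : nat) : \bar R :=
  (Kc a C' * (mu0 `^ (- tauc C') * nu `^ (- tauc C')) * rhoc a C' ^+ m)%:E.

Hypothesis bQ : beurling_system Q.
Hypothesis C0 : 0 < C'.
Hypothesis a1 : 1 < a.

Lemma Idx_countable : countable Idx.
Proof.
have cN := NQ_countable bQ.
by apply: countableX => //; apply: countableX => //; exact: countableP.
Qed.

Lemma Jset_meas i N : measurable (Jset i N).
Proof. by rewrite /Jset; case: pselect => _ //; exact: measurable_realfun.measurable_ball. Qed.

Lemma Jset_mu i N : Idx i -> (mu (Jset i N) <= (N.+1%:R)^-1%:E * Wt i.1 i.2.1 i.2.2)%E.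
Proof.
move=> [Nnu [Nmu _]].
have [Q1 _ _] := bQ.
have nu1 := bi_ge1 Q1 Nnu; have mu1 := bi_ge1 Q1 Nmu.
have a0 : 0 < a by apply: lt_trans a1.
have nu0 : 0 < i.1 by apply: lt_le_trans nu1.
have mu0' : 0 < i.2.1 by apply: lt_le_trans mu1.
rewrite /Jset; case: pselect => [e|_]; last first.
  rewrite measure0 -EFinM lee_fin mulr_ge0// ?invr_ge0//.
  by rewrite /rhoc mulr_ge0 ?exprn_ge0 ?mulr_ge0 ?powR_ge0// ltW// expR_gt0.
have [aq [qa hq]] := xgetPex 0 e.
set q0 := xget 0 (Pset i N) in aq qa hq.
have pw1 : i.2.1 `^ (- C') <= 1.
  rewrite -[X in _ <= X](powRr0 i.2.1); apply: ler_powR => //.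
  by rewrite oppr_le0 ltW.
have d1 : dlt i N <= 1.
  rewrite /dlt; apply: le_trans (_ : (N.+1%:R)^-1 * 1 <= 1).
    by apply: ler_wpM2l => //; rewrite invr_ge0.
  by rewrite mulr1 invf_le1// ler1n.
have r0 : 0 <= rad i N.
  by rewrite /rad divr_ge0 ?mulr_ge0 ?invr_ge0 ?powR_ge0 ?exprn_ge0 ?ltW.
rewrite lebesgue_measure_ball// -EFinM lee_fin.
have := wbound a1 C0 nu1 mu1 aq qa (lt_le_trans hq d1).
have -> : rad i N *+ 2 = (N.+1%:R)^-1 * (4 * i.2.1 `^ (- C') / (i.1 * a ^+ i.2.2)).
  rewrite /rad /dlt mulr2n; field.
  by rewrite !gt_eqF ?exprn_gt0//.
by move=> h; apply: ler_wpM2l => //; rewrite invr_ge0.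
Qed.

Lemma rho_bounds : 0 < rhoc a C' < 1.
Proof.
rewrite /rhoc expR_gt0 expR_lt1 oppr_lt0 /=.
apply: mulr_gt0; last by apply: ln_gt0.
by rewrite lt_min ltr01 C0.
Qed.

Lemma sumW : (\esum_(x in NQ) (x `^ (- tauc C'))%:E < +oo)%E ->
  exists S : R, (\esum_(i in Idx) Wt i.1 i.2.1 i.2.2 <= S%:E)%E.
Proof.
move=> Afin.
set A := (\esum_(x in NQ) (x `^ (- tauc C'))%:E) in Afin *.
have A0 : (0 <= A)%E by apply: esum_ge0 => x _; rewrite lee_fin powR_ge0.
have AE : A = (fine A)%:E by rewrite fineK// ge0_fin_numE.
have [rho0 rho1] := andP rho_bounds.
set rho := rhoc a C' in rho0 rho1 *.
set K := Kc a C'.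
have K0 : 0 <= K by rewrite /K /Kc ltW// expR_gt0.
exists (K * (fine A * fine A) * (1 - rho)^-1).
have E : \esum_(i in Idx) Wt i.1 i.2.1 i.2.2 =
    \esum_(nu in NQ) \esum_(j in NQ `*` [set: nat]) Wt nu j.1 j.2.
  rewrite esum_esum//.
  move=> nu j _ _; rewrite lee_fin /rhoc !mulr_ge0 ?powR_ge0 ?exprn_ge0// ltW// expR_gt0.
rewrite E.
set t := tauc C'.
have g0 : 0 <= (1 - rho)^-1 by rewrite invr_ge0 subr_ge0 ltW.
have pw0 x : 0 <= x `^ (- t) by apply: powR_ge0.
have A1 : (\esum_(x in NQ) (x `^ (- t))%:E <= (fine A)%:E)%E by rewrite -AE.
have step c : 0 <= c ->
    (\esum_(x in NQ) (c * x `^ (- t))%:E <= (c * fine A)%:E)%E.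
  move=> c0; under eq_esum do rewrite EFinM.
  apply: le_trans (esumZl_le c0 _) _; first by move=> x _; rewrite lee_fin.
  by rewrite EFinM; apply: lee_wpmul2l; rewrite ?lee_fin.
apply: le_trans (_ : (\esum_(nu in NQ) ((fine A * K * (1 - rho)^-1) * nu `^ (- t))%:E
   <= _)%E); last first.
  apply: le_trans (step _ _) _; first by rewrite !mulr_ge0// fine_ge0.
  by rewrite lee_fin le_eqVlt; apply/orP; left; apply/eqP; ring.
apply: le_esum => nu Nnu.
have E2 : \esum_(j in NQ `*` [set: nat]) Wt nu j.1 j.2 =
    \esum_(mu0 in NQ) \esum_(m in [set: nat]) Wt nu mu0 m.
  rewrite esum_esum//.
  move=> mu0 m _ _; rewrite lee_fin /rhoc !mulr_ge0 ?powR_ge0 ?exprn_ge0// ltW// expR_gt0.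
rewrite E2.
apply: le_trans (_ : (\esum_(mu0 in NQ) ((K * nu `^ (- t) * (1 - rho)^-1) * mu0 `^ (- t))%:E
   <= _)%E).
  apply: le_esum => mu0 Nmu0.
  rewrite /Wt -/K -/t -/rho; under eq_esum do rewrite EFinM.
  have c0 : 0 <= K * (mu0 `^ (- t) * nu `^ (- t)) by rewrite !mulr_ge0.
  apply: le_trans (esumZl_le c0 _) _.
    by move=> m _; rewrite lee_fin exprn_ge0// ltW.
  apply: le_trans (_ : ((K * (mu0 `^ (- t) * nu `^ (- t)))%:E * ((1 - rho)^-1)%:E <= _)%E).
    by apply: lee_wpmul2l; rewrite ?lee_fin//; apply: geo_esum; rewrite rho0 rho1.
  by rewrite -EFinM lee_fin le_eqVlt; apply/orP; left; apply/eqP; ring.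
apply: le_trans (step _ _) _; first by rewrite !mulr_ge0.
by rewrite lee_fin le_eqVlt; apply/orP; left; apply/eqP; ring.
Qed.

Lemma metric_neg : (\esum_(x in NQ) (x `^ (- tauc C'))%:E < +oo)%E ->
  mu.-negligible [set q | a <= q /\ q <= a ^+ 2 /\ ~ good Q C' q].
Proof.
move=> Afin; have [S hS] := sumW Afin.
have cI := Idx_countable.
have hU N : measurable (Uset N) /\ (mu (Uset N) <= ((N.+1%:R)^-1 * S)%:E)%E.
  have [mU leU] := cbigcup cI (fun i _ => Jset_meas i N).
  split => //; apply: le_trans leU _.
  apply: le_trans (_ : \esum_(i in Idx) ((N.+1%:R)^-1%:E * Wt i.1 i.2.1 i.2.2) <= _)%E.
    by apply: le_esum => i Ii; apply: Jset_mu.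
  have k0 : 0 <= (N.+1%:R)^-1 :> R by rewrite invr_ge0.
  apply: le_trans (esumZl_le k0 _) _.
    by move=> i _; rewrite lee_fin /rhoc !mulr_ge0 ?powR_ge0 ?exprn_ge0// ltW// expR_gt0.
  by rewrite EFinM; apply: lee_wpmul2l => //; rewrite lee_fin.
have [Q1 _ _] := bQ.
have a0 : 0 < a by apply: lt_trans a1.
exists (\bigcap_N Uset N); split.
- by apply: bigcapT_measurable => N; exact: (hU N).1.
- have mA : measurable (\bigcap_N Uset N) by apply: bigcapT_measurable => N; exact: (hU N).1.
  have hle N : (mu (\bigcap_N Uset N) <= ((N.+1%:R)^-1 * S)%:E)%E.
    apply: le_trans (hU N).2; apply: le_measure; rewrite ?inE//; first exact: (hU N).1.
    by move=> x /(_ N I).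
  set m0 := mu _ in hle *.
  have m00 : (0 <= m0)%E by apply: measure_ge0.
  have mfin : m0 \is a fin_num.
    by rewrite ge0_fin_numE//; apply: le_lt_trans (hle 0%N) _; rewrite ltry.
  rewrite -(fineK mfin); congr EFin; apply/eqP; rewrite eq_le fine_ge0// andbT.
  rewrite leNgt; apply/negP => x0.
  set x := fine m0 in x0.
  have hx N : x <= (N.+1%:R)^-1 * S by rewrite -lee_fin /x fineK.
  have S0 : 0 <= S by have := hx 0%N; rewrite invr1 mul1r => h; apply: le_trans h; apply: ltW.
  pose N := Num.Def.archi_bound (S / x).
  have := archi_boundP (divr_ge0 S0 (ltW x0)); rewrite -/N => hN.
  have := hx N; rewrite leNgt => /negP; apply.
  rewrite mulrC ltr_pdivrMr// -ltr_pdivrMl//.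
  rewrite mulrC; apply: lt_trans hN _; by rewrite ltr_nat.
- move=> q [aq [qa ng]] N _.
  apply: contrapT => nU; apply: ng; exists ((N.+1%:R)^-1); first by rewrite invr_gt0.
  move=> nu mu0 m Nnu Nmu; rewrite leNgt; apply/negP => h; apply: nU.
  exists (nu, (mu0, m)); first by split => //; split.
  have Pq : Pset (nu, (mu0, m)) N q by split => //; split.
  rewrite /Jset; case: pselect => [e|ne]; last by exfalso; apply: ne; exists q.
  have [ax [xa hx]] := xgetPex 0 e.
  set x := xget 0 _ in ax xa hx *.
  have nu1 := bi_ge1 Q1 Nnu.
  have nu0 : 0 < nu by apply: lt_le_trans nu1.
  rewrite -ball_normE /= /rad /=.
  move: hx h => /= hx h.
  have hd := powdiff m a0 ax aq.
  have : nu * `|x ^+ m.+1 - q ^+ m.+1| < 2 * dlt (nu, (mu0, m)) N.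
    have -> : nu * `|x ^+ m.+1 - q ^+ m.+1| =
       `|(nu * x ^+ m.+1 - mu0) - (nu * q ^+ m.+1 - mu0)|.
      by rewrite -{1}(ger0_norm (ltW nu0)) -normrM; congr `|_|; ring.
    apply: le_lt_trans (ler_normB _ _) _.
    move: hx; rewrite /dlt /= => hx.
    by rewrite mulr_natl mulr2n; apply: ltrD.
  move=> hlt; rewrite ltr_pdivlMr ?mulr_gt0 ?exprn_gt0//.
  apply: le_lt_trans hlt; rewrite mulrC -mulrA; apply: ler_wpM2l; first exact: ltW.
  by [].
Qed.

End Metric.

Section Final.
Variable R : realType.

Lemma cover (q : R) : 1 < q ->
  (exists n : nat, 1 + (n.+1%:R)^-1 <= q /\ q <= (1 + (n.+1%:R)^-1) ^+ 2) \/
  (exists n : nat, (n.+2)%:R <= q /\ q <= ((n.+2)%:R) ^+ 2 :> R).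
Proof.
move=> q1; have [q2|q2] := leP q 2.
  left; set y := (q - 1)^-1.
  have y0 : 0 <= y by rewrite invr_ge0 subr_ge0 ltW.
  have /andP[hn1 hn2] := truncn_itv y0.
  set n := Num.Def.trunc y in hn1 hn2.
  exists n; set u := n.+1%:R : R.
  have u0 : 0 < u by rewrite ltr0n.
  have q10 : 0 < q - 1 by rewrite subr_gt0.
  have hu : 1 < u * (q - 1) by rewrite -ltr_pdivrMr// div1r.
  have hu2 : u * (q - 1) <= 2.
    have : n%:R * (q - 1) <= 1 by rewrite -ler_pdivlMr// div1r.
    rewrite /u -natr1 mulrDl mul1r; lra.
  set t := u^-1.
  have tu : t * u = 1 by rewrite mulVf// gt_eqF.
  have t0 : 0 < t by rewrite invr_gt0.
  split; first nra.
  nra.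
right; have q20 : (2:R) <= q by apply: ltW.
have q0 : (0:R) <= q by apply: le_trans q20.
have T2 : (2 <= Num.Def.trunc q)%N by rewrite truncn_ge_nat.
have /andP[hn1 hn2] := truncn_itv q0.
set T := Num.Def.trunc q in T2 hn1 hn2.
exists (T - 2)%N; rewrite -addn2 subnK//; split => //.
apply: (le_trans (ltW hn2)).
have : (2 : R) <= T%:R by rewrite ler_nat.
rewrite -natr1; nra.
Qed.

End Final.

Lemma Cfacts (R : realType) (sg : \bar R) (C eps : R) : 0 < eps -> (sg < +oo)%E ->
  let C' := fine (Order.max C%:E (2%:E * sg - 1%:E + eps%:E)%E) in
  C <= C' /\ (sg < (tauc C')%:E)%E.
Proof.
move=> eps0; case: sg => [r| |] //= _.
  have -> : (2%:E * r%:E - 1%:E + eps%:E)%E = (2 * r - 1 + eps)%:E by [].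
  have [h|h] := leP C (2 * r - 1 + eps).
    rewrite max_r /=; last by rewrite lee_fin.
    split => //.
    by rewrite lte_fin /tauc; lra.
  rewrite max_l /=; last by rewrite lee_fin ltW.
  split => //.
  by rewrite lte_fin /tauc; lra.
rewrite mulrNy gtr0_sg// mul1e !addNye maxeNy /=; split => //.
by rewrite ltNyr.
Qed.

Unset Implicit Arguments.
Unset Strict Implicit.

Theorem lemma2p1 (R : realType) (Q : set R) (c C : R) :
  beurling_system Q ->
  (sigma_c Q < +oo)%E ->
  0 < c -> 0 < C ->
  gap_condition Q c C ->
  forall eps : R, 0 < eps ->
  {ae (@lebesgue_measure R), forall q' : R, 1 < q' ->
     beurling_system (Q `|` [set q']) /\
     exists2 c' : R, 0 < c' &
       gap_condition (Q `|` [set q']) c'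
         (fine (Order.max C%:E (2%:E * sigma_c Q - 1%:E + eps%:E)%E))}.
Proof.
move=> bQ sfin c0 C0 gQ eps eps0.
have [CC' tauS] := Cfacts C eps0 sfin.
set C' := fine _ in CC' tauS *.
have C'0 : 0 < C' by apply: lt_le_trans CC'.
have [Q1 _ _] := bQ.
have Afin : (\esum_(x in beurling_integers Q) (x `^ (- tauc C'))%:E < +oo)%E.
  move: tauS; rewrite /sigma_c => /ereal_inf_lt[_ [s Ss <-]].
  rewrite lte_fin => st; apply: le_lt_trans Ss.
  apply: le_esum => x Nx; rewrite lee_fin; apply: ler_powR; first exact: bi_ge1 Q1 Nx.
  by rewrite lerN2 ltW.
pose a1 (n : nat) : R := 1 + (n.+1%:R)^-1.
pose a2 (n : nat) : R := (n.+2)%:R.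
have a1g n : 1 < a1 n by rewrite /a1 ltrDl invr_gt0.
have a2g n : 1 < a2 n by rewrite /a2 ltr1n.
have N1 := fun n => metric_neg bQ C'0 (a1g n) Afin.
have N2 := fun n => metric_neg bQ C'0 (a2g n) Afin.
have NG : (@lebesgue_measure R).-negligible (Gbad Q).
  exists (Gbad Q); split => //.
    apply: countable_measurable; last exact: Gbad_countable.
    by move=> t; rewrite -set_itv1; exact: measurable_itv.
  exact: countable_lebesgue_measure0 (Gbad_countable bQ).
have NN := negligibleU (negligibleU NG (negligible_bigcup N1)) (negligible_bigcup N2).
apply: negligibleS NN.
move=> q /= /not_implyP[q1 nPq]; apply: contrapT => hnot; apply: nPq.
have nG : ~ Gbad Q q by move=> h; apply: hnot; left; left.
have gq : good Q C' q.
  apply: contrapT => ng.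
  case: (cover q1) => [[n [h1 h2]]|[n [h1 h2]]]; apply: hnot.
    by left; right; exists n => //.
  by right; exists n => //.
split; first exact: indep_union bQ q1 nG.
exact: gap_union bQ c0 C0 CC' gQ q1 gq.
Qed.
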